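(* (i) For any $r>0$, the function $X\mapsto n_r(X)$ is upper semicontinuous on compact metric spaces with respect to the Gromov–Hausdorff topology. (ii) For any $r>0$, $R>0$, the function $(X,x)\mapsto n_r(\overline{B}_X(x,R))$ is upper semicontinuous on pointed proper metric spaces with respect to the pointed Gromov–Hausdorff topology. (iii) For any $r>0$, the function $X\mapsto \overline{n}_r(X)$ is lower semicontinuous on compact metric spaces with respect to the Gromov–Hausdorff topology. (iv) For any $r>0$, $R>0$, the function $(X,x)\mapsto \overline{n}_r(\overline{B_X(x,R)})$ is lower semicontinuous on pointed proper metric spaces with respect to the pointed Gromov–Hausdorff topology.
   Context: For a metric space $X$ and $A\subseteq X$, $n_r(A)$ (resp. $\overline{n}_r(A)$) is the minimum number of open (resp. closed) balls of radius $r$ needed to cover $A$. $\overline{B}_X(x,R)=\{y:d(x,y)\le R\}$ and $\overline{B_X(x,R)}$ is the closure of the open ball $B_X(x,R)$. Gromov–Hausdorff topology on isometry classes of compact metric spaces, and pointed Gromov–Hausdorff topology on isometry classes of pointed proper metric spaces, are the standard ones. *)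

(* Defs.v *)
From Stdlib Require Import Reals Lra List ClassicalEpsilon.
Open Scope R_scope.

Record MetricSpace := {
  mcarrier :> Type;
  mdist : mcarrier -> mcarrier -> R;
  mdist_refl : forall x, mdist x x = 0;
  mdist_eq : forall x y, mdist x y = 0 -> x = y;
  mdist_sym : forall x y, mdist x y = mdist y x;
  mdist_tri : forall x y z, mdist x z <= mdist x y + mdist y z
}.
Arguments mdist {m}.

Section Defs.
Variable X : MetricSpace.

Definition is_open (U : X -> Prop) : Prop :=
  forall x, U x -> exists e, 0 < e /\ forall y, mdist x y < e -> U y.

Definition compact_set (A : X -> Prop) : Prop :=
  forall (I : Type) (U : I -> X -> Prop),
    (forall i, is_open (U i)) ->
    (forall a, A a -> exists i, U i a) ->
    exists l : list I, forall a, A a -> exists i, In i l /\ U i a.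

Definition full : X -> Prop := fun _ => True.

Definition cball (x : X) (R : R) : X -> Prop := fun y => mdist x y <= R.
Definition oball (x : X) (R : R) : X -> Prop := fun y => mdist x y < R.
Definition closure (A : X -> Prop) : X -> Prop :=
  fun y => forall e, 0 < e -> exists z, A z /\ mdist z y < e.

Definition covered_open (A : X -> Prop) (r : R) (l : list X) : Prop :=
  forall a, A a -> exists c, In c l /\ mdist c a < r.
Definition covered_closed (A : X -> Prop) (r : R) (l : list X) : Prop :=
  forall a, A a -> exists c, In c l /\ mdist c a <= r.

Definition is_min_cover (cov : list X -> Prop) (N : nat) : Prop :=
  (exists l, cov l /\ length l = N) /\ (forall l, cov l -> (N <= length l)%nat).

(** n_r(A) and \overline{n}_r(A): the (unique) minimum when it exists
    (always the case below, since the sets involved are compact). *)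
Definition n_open (A : X -> Prop) (r : R) : nat :=
  epsilon (inhabits 0%nat) (is_min_cover (covered_open A r)).
Definition n_closed (A : X -> Prop) (r : R) : nat :=
  epsilon (inhabits 0%nat) (is_min_cover (covered_closed A r)).
End Defs.

Arguments full {X}.

Definition compact_ms (X : MetricSpace) : Prop := compact_set X full.
Definition proper_ms (X : MetricSpace) : Prop :=
  forall (x : X) (R : R), compact_set X (cball X x R).

Definition eps_correspondence (X Y : MetricSpace) (C : X -> Y -> Prop) (eps : R)
  : Prop :=
  (forall x, exists y, C x y) /\ (forall y, exists x, C x y) /\
  (forall x x' y y', C x y -> C x' y' -> Rabs (mdist x x' - mdist y y') < eps).

(** Gromov-Hausdorff convergence X_k -> Y of compact metric spaces
    (d_GH(X_k,Y) -> 0, via correspondences). *)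
Definition GH_conv (X : nat -> MetricSpace) (Y : MetricSpace) : Prop :=
  forall eps, 0 < eps -> exists k0, forall k, (k0 <= k)%nat ->
    exists C : X k -> Y -> Prop, eps_correspondence (X k) Y C eps.

(** Pointed Gromov-Hausdorff convergence (X_k,p_k) -> (Y,q)
    (Burago-Burago-Ivanov, Def. 8.1.1). *)
Definition pGH_conv (X : nat -> MetricSpace) (p : forall k, X k)
    (Y : MetricSpace) (q : Y) : Prop :=
  forall rho eps, 0 < rho -> 0 < eps -> exists k0, forall k, (k0 <= k)%nat ->
    exists f : X k -> Y,
      f (p k) = q /\
      (forall x x', oball (X k) (p k) rho x -> oball (X k) (p k) rho x' ->
         Rabs (mdist (f x) (f x') - mdist x x') < eps) /\
      (forall y, oball Y q (rho - eps) y ->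
         exists x, oball (X k) (p k) rho x /\ mdist (f x) y < eps).
Arguments n_open : clear implicits.
Arguments n_closed : clear implicits.
Arguments cball : clear implicits.
Arguments oball : clear implicits.
Arguments closure : clear implicits.

(* Main.v *)
Require Import Defs.
From Stdlib Require Import Reals Lra Lia List ClassicalEpsilon Classical Arith.
Open Scope R_scope.

Lemma ipos (m : nat) : 0 < / (INR m + 1).
Proof. apply Rinv_0_lt_compat. pose proof (pos_INR m). lra. Qed.

Lemma ile1 (m : nat) : / (INR m + 1) <= 1.
Proof. pose proof (pos_INR m). rewrite <- Rinv_1. apply Rinv_le_contravar; lra. Qed.

Lemma imono (m0 m : nat) : (m0 <= m)%nat -> / (INR m + 1) <= / (INR m0 + 1).
Proof.
  intros H. apply Rinv_le_contravar. pose proof (pos_INR m0); lra.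
  apply le_INR in H. lra.
Qed.

Lemma arch (t : R) : 0 < t -> exists m : nat, / (INR m + 1) < t.
Proof.
  intros Ht. destruct (archimed_cor1 t Ht) as [N [HN HN0]].
  exists N. eapply Rle_lt_trans; [|exact HN].
  apply Rinv_le_contravar. apply lt_0_INR; lia. lra.
Qed.

Lemma fold_max (A : Type) (g : A -> nat) (L : list A) (i : A) :
  In i L -> (g i <= fold_right (fun i acc => Nat.max (g i) acc) 0%nat L)%nat.
Proof.
  induction L as [|a L IH]; simpl; intros Hi; [contradiction|].
  destruct Hi as [<-|Hi]; [lia|]. specialize (IH Hi). lia.
Qed.

Lemma fold_rmax (A : Type) (g : A -> R) (L : list A) (i : A) :
  In i L -> g i <= fold_right (fun i acc => Rmax (g i) acc) 0 L.
Proof.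
  induction L as [|a L IH]; simpl; intros Hi; [contradiction|].
  destruct Hi as [<-|Hi]; [apply Rmax_l|]. specialize (IH Hi).
  eapply Rle_trans; [exact IH|apply Rmax_r].
Qed.

Lemma fold_rmax0 (A : Type) (g : A -> R) (L : list A) :
  0 <= fold_right (fun i acc => Rmax (g i) acc) 0 L.
Proof.
  induction L as [|a L IH]; simpl; [lra|].
  eapply Rle_trans; [exact IH|apply Rmax_r].
Qed.

Definition infinite (P : nat -> Prop) := forall N, exists n, (N <= n)%nat /\ P n.

Fixpoint iter_seq (nx : nat -> nat -> nat) (j : nat) : nat :=
  match j with O => nx O O | S j' => nx (S (iter_seq nx j')) (S j') end.

Section Gen.
Variable X : MetricSpace.

Lemma d_nonneg (x y : X) : 0 <= mdist x y.
Proof.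
  pose proof (mdist_tri X x y x) as H. rewrite mdist_refl, (mdist_sym X y x) in H. lra.
Qed.

Lemma open_ball_prop (Q : Prop) (c : X) (s : R) : is_open X (fun z => Q /\ mdist c z < s).
Proof.
  intros x [HQ Hx]. exists (s - mdist c x). split; [lra|].
  intros y Hy. split; [exact HQ|]. pose proof (mdist_tri X c x y). lra.
Qed.

Lemma open_ball (c : X) (s : R) : is_open X (oball X c s).
Proof.
  intros x Hx. unfold oball in *. exists (s - mdist c x). split; [lra|].
  intros y Hy. pose proof (mdist_tri X c x y). lra.
Qed.

Lemma open_gt (q : X) (t : R) : is_open X (fun z => t < mdist q z).
Proof.
  intros x Hx. exists (mdist q x - t). split; [lra|].
  intros y Hy. pose proof (mdist_tri X q y x). rewrite (mdist_sym X y x) in H. lra.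
Qed.

Lemma min_exists (cov : list X -> Prop) : (exists l, cov l) -> exists N, is_min_cover X cov N.
Proof.
  intros [l Hl].
  assert (H : forall n, (exists l, cov l /\ length l = n) -> exists N, is_min_cover X cov N).
  { induction n as [n IH] using (well_founded_induction lt_wf).
    intros Hn.
    destruct (classic (exists l', cov l' /\ (length l' < n)%nat)) as [[l' [H1 H2]]|Hno].
    - apply (IH (length l') H2). eauto.
    - exists n. split; [exact Hn|]. intros l' Hl'.
      destruct (le_lt_dec n (length l')); auto. exfalso; apply Hno; eauto. }
  apply (H (length l)). eauto.
Qed.

Lemma n_open_spec (A : X -> Prop) (r : R) : (exists l, covered_open X A r l) ->
  (exists l, covered_open X A r l /\ length l = n_open X A r) /\
  (forall l, covered_open X A r l -> (n_open X A r <= length l)%nat).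
Proof. intros H. unfold n_open. apply epsilon_spec. apply min_exists; auto. Qed.

Lemma n_closed_spec (A : X -> Prop) (r : R) : (exists l, covered_closed X A r l) ->
  (exists l, covered_closed X A r l /\ length l = n_closed X A r) /\
  (forall l, covered_closed X A r l -> (n_closed X A r <= length l)%nat).
Proof. intros H. unfold n_closed. apply epsilon_spec. apply min_exists; auto. Qed.

Lemma compact_open_cover (A : X -> Prop) r : 0 < r -> compact_set X A ->
  exists l, covered_open X A r l.
Proof.
  intros Hr HA. destruct (HA X (fun c => oball X c r)) as [l Hl].
  - intros c. apply open_ball.
  - intros a _. exists a. unfold oball. rewrite mdist_refl. lra.
  - exists l. exact Hl.
Qed.

Lemma compact_closed_cover (A B : X -> Prop) r : 0 < r -> compact_set X B ->
  (forall y, A y -> B y) -> exists l, covered_closed X A r l.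
Proof.
  intros Hr HB HAB. destruct (compact_open_cover B r Hr HB) as [l Hl].
  exists l. intros a Ha. destruct (Hl a (HAB a Ha)) as [c [Hc Hd]]. exists c; split; auto; lra.
Qed.

Lemma closure_ball (z : X) (Rad : R) y : closure X (oball X z Rad) y -> mdist z y <= Rad.
Proof.
  intros H. apply Rnot_lt_le. intros Hlt.
  destruct (H (mdist z y - Rad)) as [w [Hw Hd]]; [lra|].
  unfold oball in Hw. pose proof (mdist_tri X z w y). lra.
Qed.

Lemma shrink (K : X -> Prop) (l : list X) (r : R) (W : nat -> X -> Prop) :
  compact_set X K -> (forall m, is_open X (W m)) ->
  (forall y, K y -> (exists c, In c l /\ mdist c y < r) \/ exists m, W m y) ->
  exists m0, forall y, K y -> (exists c, In c l /\ mdist c y < r - / (INR m0 + 1))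
     \/ exists m, (m <= m0)%nat /\ W m y.
Proof.
  intros HK HW Hcov.
  pose (U := fun i : (X * nat) + nat => match i with
     | inl (c, m) => fun y => In c l /\ mdist c y < r - / (INR m + 1)
     | inr m => W m end).
  destruct (HK _ U) as [L HL].
  - intros [[c m]|m]; simpl. apply open_ball_prop. apply HW.
  - intros y Hy. destruct (Hcov y Hy) as [[c [Hc Hd]]|[m Hm]].
    + destruct (arch (r - mdist c y)) as [m Hm]; [lra|]. exists (inl (c, m)); simpl. split; auto; lra.
    + exists (inr m). exact Hm.
  - pose (idx := fun i : (X*nat)+nat => match i with inl (_, m) => m | inr m => m end).
    exists (fold_right (fun i acc => Nat.max (idx i) acc) 0%nat L).
    intros y Hy. destruct (HL y Hy) as [i [Hi HUi]].
    pose proof (fold_max _ idx L i Hi) as Hmax.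
    destruct i as [[c m]|m]; simpl in *.
    + left. exists c. destruct HUi as [Hc Hd]. split; auto.
      pose proof (imono _ _ Hmax). lra.
    + right. exists m. auto.
Qed.

Lemma cluster (K : X -> Prop) (a : nat -> X) (P : nat -> Prop) :
  compact_set X K -> (forall n, K (a n)) -> infinite P ->
  exists y, forall e, 0 < e -> forall N, exists n, (N <= n)%nat /\ P n /\ mdist (a n) y < e.
Proof.
  intros HK Ha HP. apply NNPP; intro Hno.
  assert (Hall : forall y, exists e N, 0 < e /\ forall n, (N <= n)%nat -> P n -> e <= mdist (a n) y).
  { intros y. apply NNPP; intro H1. apply Hno. exists y. intros e He N.
    apply NNPP; intro H2. apply H1. exists e, N. split; auto. intros n Hn HPn.
    apply Rnot_lt_le. intro H3. apply H2. eauto. }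
  pose (U := fun i : X * R * nat => match i with (y, e, N) => fun z =>
     (0 < e /\ forall n, (N <= n)%nat -> P n -> e <= mdist (a n) y) /\ mdist y z < e end).
  destruct (HK _ U) as [L HL].
  - intros [[y e] N]. apply open_ball_prop.
  - intros z _. destruct (Hall z) as [e [N [He HN]]]. exists (z, e, N). simpl.
    split; [auto| rewrite mdist_refl; lra].
  - destruct (HP (fold_right (fun i acc => Nat.max (snd i) acc) 0%nat L)) as [n [Hn HPn]].
    destruct (HL (a n) (Ha n)) as [[[y e] N] [Hi HU]].
    simpl in HU. destruct HU as [[He HN] Hd].
    pose proof (fold_max _ snd L _ Hi) as Hm. simpl in Hm.
    specialize (HN n ltac:(lia) HPn). rewrite mdist_sym in HN. lra.
Qed.

Lemma subseq (a : nat -> X) (P : nat -> Prop) (y : X) :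
  (forall e, 0 < e -> forall N, exists n, (N <= n)%nat /\ P n /\ mdist (a n) y < e) ->
  exists P', (forall n, P' n -> P n) /\ infinite P' /\
    forall e, 0 < e -> exists N, forall n, (N <= n)%nat -> P' n -> mdist (a n) y < e.
Proof.
  intros Hc.
  assert (Hx : forall N j : nat, exists n, (N <= n)%nat /\ P n /\ mdist (a n) y < / (INR j + 1)).
  { intros N j. apply Hc. apply ipos. }
  pose (nx := fun N j => proj1_sig (constructive_indefinite_description _ (Hx N j))).
  assert (Hnx : forall N j, (N <= nx N j)%nat /\ P (nx N j) /\ mdist (a (nx N j)) y < / (INR j + 1)).
  { intros N j. unfold nx. destruct (constructive_indefinite_description _ _) as [n Hn]. exact Hn. }
  assert (Hs : forall j, P (iter_seq nx j) /\ mdist (a (iter_seq nx j)) y < / (INR j + 1)).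
  { intros [|j]; simpl; apply Hnx. }
  assert (Hinc : forall j, (iter_seq nx j < iter_seq nx (S j))%nat).
  { intros j. simpl. destruct (Hnx (S (iter_seq nx j)) (S j)) as [H _]. lia. }
  assert (Hmono : forall J j, (j < J)%nat -> (iter_seq nx j < iter_seq nx J)%nat).
  { induction J as [|J IH]; intros j Hj; [lia|].
    specialize (Hinc J). destruct (Nat.eq_dec j J) as [->|Hne]; [lia|].
    specialize (IH j ltac:(lia)). lia. }
  assert (Hge : forall j, (j <= iter_seq nx j)%nat).
  { induction j as [|j IH]; [lia|]. specialize (Hinc j). lia. }
  exists (fun n => exists j, iter_seq nx j = n). split; [|split].
  - intros n [j <-]. apply Hs.
  - intros N. exists (iter_seq nx N). split; eauto.
  - intros e He. destruct (arch e He) as [J HJ]. exists (iter_seq nx J).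
    intros n Hn [j <-].
    destruct (le_lt_dec J j) as [HJj|HjJ].
    + destruct (Hs j) as [_ Hd]. pose proof (imono _ _ HJj). lra.
    + specialize (Hmono J j HjJ). lia.
Qed.

Lemma joint (K : X -> Prop) (c : nat -> nat -> X) : compact_set X K -> (forall m j, K (c m j)) ->
  forall M, exists (y : nat -> X) (P : nat -> Prop), infinite P /\
    forall e, 0 < e -> exists N, forall m, (N <= m)%nat -> P m -> forall j, (j < M)%nat ->
      mdist (c m j) (y j) < e.
Proof.
  intros HK Hc. induction M as [|M IH].
  - exists (c O), (fun _ => True). split.
    + intros N; exists N; split; auto.
    + intros e He; exists O; intros; lia.
  - destruct IH as [y [P [HP Hconv]]].
    destruct (cluster K (fun m => c m M) P HK (fun m => Hc m M) HP) as [yM HyM].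
    destruct (subseq (fun m => c m M) P yM HyM) as [P' [Hsub [Hinf Hconv']]].
    exists (fun j => if Nat.eqb j M then yM else y j), P'. split; auto.
    intros e He. destruct (Hconv e He) as [N1 H1]. destruct (Hconv' e He) as [N2 H2].
    exists (Nat.max N1 N2). intros m Hm HPm j Hj.
    destruct (Nat.eqb_spec j M) as [->|Hne].
    + apply H2; auto; lia.
    + apply H1; auto; lia.
Qed.

Lemma finite_gap (g : nat -> R) (r : R) : forall M, (forall j, (j < M)%nat -> r < g j) ->
  exists eta, 0 < eta /\ forall j, (j < M)%nat -> r + eta < g j.
Proof.
  induction M as [|M IH]; intros H.
  - exists 1. split; [lra|]. intros; lia.
  - destruct IH as [eta [He Hj]]. { intros j Hj; apply H; lia. }
    assert (HM : r < g M) by (apply H; lia).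
    exists (Rmin eta ((g M - r)/2)). split. { apply Rmin_pos; lra. }
    intros j Hj'. destruct (Nat.eq_dec j M) as [->|Hne].
    + pose proof (Rmin_r eta ((g M - r)/2)). lra.
    + pose proof (Rmin_l eta ((g M - r)/2)). specialize (Hj j ltac:(lia)). lra.
Qed.

Lemma limit_cover (K A : X -> Prop) (c : nat -> nat -> X) (M : nat) (r : R) :
  compact_set X K -> (forall m j, K (c m j)) ->
  (forall y, A y -> forall eta, 0 < eta -> exists m0, forall m, (m0 <= m)%nat ->
      exists j, (j < M)%nat /\ mdist (c m j) y <= r + eta) ->
  exists l, length l = M /\ covered_closed X A r l.
Proof.
  intros HK Hc H.
  destruct (joint K c HK Hc M) as [y [P [HP Hconv]]].
  exists (map y (seq 0 M)). split. { rewrite length_map, length_seq; reflexivity. }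
  intros a Ha.
  destruct (classic (exists j, (j < M)%nat /\ mdist (y j) a <= r)) as [[j [Hj Hd]]|Hno].
  - exists (y j). split; auto. apply in_map. apply in_seq. lia.
  - exfalso.
    destruct (finite_gap (fun j => mdist (y j) a) r M) as [eta [He Hg]].
    { intros j Hj. apply Rnot_le_lt. intro Hd. apply Hno. eauto. }
    destruct (H a Ha (eta/2)) as [m0 Hm0]; [lra|].
    destruct (Hconv (eta/2)) as [N HN]; [lra|].
    destruct (HP (Nat.max m0 N)) as [m [Hm HPm]].
    destruct (Hm0 m ltac:(lia)) as [j [Hj Hd]].
    specialize (HN m ltac:(lia) HPm j Hj). specialize (Hg j Hj). simpl in Hg.
    pose proof (mdist_tri X (y j) (c m j) a). rewrite mdist_sym in HN. lra.
Qed.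

End Gen.

Lemma part1 r : 0 < r -> forall (X : nat -> MetricSpace) (Y : MetricSpace),
     (forall k, compact_ms (X k)) -> compact_ms Y -> GH_conv X Y ->
     exists k0, forall k, (k0 <= k)%nat ->
       (n_open (X k) full r <= n_open Y full r)%nat.
Proof.
  intros Hr X Y HX HY HGH.
  destruct (n_open_spec Y full r) as [[l [Hl Hlen]] _].
  { apply compact_open_cover; auto. }
  destruct (shrink Y full l r (fun _ _ => False) HY) as [m0 Hm0].
  { intros m x []. }
  { intros y _. left. apply Hl. exact I. }
  pose proof (ipos m0) as Hd.
  destruct (HGH (/ (INR m0 + 1) / 2)) as [k0 Hk0]; [lra|].
  exists k0. intros k Hk. destruct (Hk0 k Hk) as [C [HC1 [HC2 HC3]]].
  assert (Hg : forall y : Y, { x : X k | C x y }).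
  { intro y. apply constructive_indefinite_description. apply HC2. }
  assert (Hcov : covered_open (X k) full r (map (fun y => proj1_sig (Hg y)) l)).
  { intros x _. destruct (HC1 x) as [y Hxy].
    destruct (Hm0 y I) as [[c [Hc Hdc]]|[m [_ []]]].
    exists (proj1_sig (Hg c)). split. { apply (in_map (fun y => proj1_sig (Hg y))); auto. }
    pose proof (HC3 _ _ _ _ (proj2_sig (Hg c)) Hxy) as H. apply Rabs_def2 in H. lra. }
  destruct (n_open_spec (X k) full r) as [_ Hmin]. { eauto. }
  rewrite <- Hlen. specialize (Hmin _ Hcov). rewrite length_map in Hmin. exact Hmin.
Qed.

Lemma part2 r Rad : 0 < r -> 0 < Rad ->
   forall (X : nat -> MetricSpace) (p : forall k, X k) (Y : MetricSpace) (q : Y),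
     (forall k, proper_ms (X k)) -> proper_ms Y -> pGH_conv X p Y q ->
     exists k0, forall k, (k0 <= k)%nat ->
       (n_open (X k) (cball (X k) (p k) Rad) r <= n_open Y (cball Y q Rad) r)%nat.
Proof.
  intros Hr HR X p Y q HX HY Hp.
  destruct (n_open_spec Y (cball Y q Rad) r) as [[l [Hl Hlen]] _].
  { apply compact_open_cover; auto. }
  destruct (shrink Y (cball Y q (Rad+1)) l r (fun m y => Rad + / (INR m + 1) < mdist q y)
     (HY q (Rad+1))) as [m0 Hm0].
  { intros m. apply open_gt. }
  { intros y Hy. destruct (Rle_dec (mdist q y) Rad) as [Hle|Hgt].
    - left. apply Hl. exact Hle.
    - right. destruct (arch (mdist q y - Rad)) as [m Hm]; [lra|]. exists m. lra. }
  pose proof (ipos m0) as Hd. pose proof (ile1 m0) as Hd1.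
  pose proof (fold_rmax _ (fun c => mdist q c) l) as HB.
  pose proof (fold_rmax0 _ (fun c => mdist q c) l) as HB0.
  set (B := fold_right (fun c acc => Rmax (mdist q c) acc) 0 l) in *.
  destruct (Hp (Rad + 2 + B) (/ (INR m0 + 1) / 2)) as [k0 Hk0]; [lra|lra|].
  exists k0. intros k Hk. destruct (Hk0 k Hk) as [f [Hfp [Hfd Hfs]]].
  pose (g := fun c => epsilon (inhabits (p k)) (fun x => oball (X k) (p k) (Rad + 2 + B) x
                 /\ mdist (f x) c < / (INR m0 + 1) / 2)).
  assert (Hg : forall c, In c l -> oball (X k) (p k) (Rad + 2 + B) (g c) /\
                 mdist (f (g c)) c < / (INR m0 + 1) / 2).
  { intros c Hc. apply epsilon_spec. apply Hfs.
    unfold oball. pose proof (HB c Hc). simpl in *. lra. }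
  assert (Hcov : covered_open (X k) (cball (X k) (p k) Rad) r (map g l)).
  { intros x Hx. unfold cball in Hx.
    assert (Hxo : oball (X k) (p k) (Rad + 2 + B) x) by (unfold oball; lra).
    assert (Hpo : oball (X k) (p k) (Rad + 2 + B) (p k)) by (unfold oball; rewrite mdist_refl; lra).
    pose proof (Hfd _ _ Hpo Hxo) as H1. rewrite Hfp in H1. apply Rabs_def2 in H1.
    destruct (Hm0 (f x)) as [[c [Hc Hdc]]|[m [Hm Hw]]].
    - unfold cball. lra.
    - destruct (Hg c Hc) as [Hgo Hgd].
      exists (g c). split; [apply in_map; auto|].
      pose proof (Hfd _ _ Hgo Hxo) as H2. apply Rabs_def2 in H2.
      pose proof (mdist_tri Y (f (g c)) c (f x)). lra.
    - exfalso. pose proof (imono m m0 Hm). simpl in Hw. lra. }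
  destruct (n_open_spec (X k) (cball (X k) (p k) Rad) r) as [_ Hmin]. { eauto. }
  rewrite <- Hlen. specialize (Hmin _ Hcov). rewrite length_map in Hmin. exact Hmin.
Qed.

Lemma part3 r : 0 < r -> forall (X : nat -> MetricSpace) (Y : MetricSpace),
     (forall k, compact_ms (X k)) -> compact_ms Y -> GH_conv X Y ->
     exists k0, forall k, (k0 <= k)%nat ->
       (n_closed Y full r <= n_closed (X k) full r)%nat.
Proof.
  intros Hr X Y HX HY HGH.
  apply NNPP; intro Hno.
  assert (Hbad : forall k0, exists k, (k0 <= k)%nat /\ (n_closed (X k) full r < n_closed Y full r)%nat).
  { intros k0. apply NNPP; intro H1. apply Hno. exists k0. intros k Hk.
    destruct (le_lt_dec (n_closed Y full r) (n_closed (X k) full r)); auto.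
    exfalso. apply H1. eauto. }
  destruct (n_closed_spec Y full r) as [[lY [HlY HlenY]] HminY].
  { apply (compact_closed_cover Y full full); auto. }
  destruct (Hbad O) as [kb [_ Hkb]].
  destruct lY as [|y0 lY']. { simpl in HlenY. lia. }
  assert (Hper : forall m : nat, exists cm : nat -> Y, forall y : Y, exists j,
     (j < n_closed Y full r - 1)%nat /\ mdist (cm j) y <= r + / (INR m + 1)).
  { intros m. destruct (HGH (/ (INR m + 1))) as [k0 Hk0]; [apply ipos|].
    destruct (Hbad k0) as [k [Hk Hlt]].
    destruct (Hk0 k Hk) as [C [HC1 [HC2 HC3]]].
    destruct (n_closed_spec (X k) full r) as [[l [Hl Hlen]] _].
    { apply (compact_closed_cover (X k) full full); [exact Hr|apply HX|auto]. }
    destruct (HC2 y0) as [x0 _].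
    exists (fun j => epsilon (inhabits y0) (C (nth j l x0))).
    intros y. destruct (HC2 y) as [x Hxy].
    destruct (Hl x I) as [c [Hc Hcd]].
    destruct (In_nth l c x0 Hc) as [j [Hj Hnth]].
    exists j. split; [lia|]. rewrite Hnth.
    assert (Hyc : C c (epsilon (inhabits y0) (C c))) by (apply epsilon_spec; apply HC1).
    pose proof (HC3 _ _ _ _ Hyc Hxy) as H. apply Rabs_def2 in H. lra. }
  pose (c := fun m => proj1_sig (constructive_indefinite_description _ (Hper m))).
  assert (Hc : forall m y, exists j, (j < n_closed Y full r - 1)%nat /\ mdist (c m j) y <= r + / (INR m + 1)).
  { intros m. unfold c. destruct (constructive_indefinite_description _ _) as [cm Hcm]. exact Hcm. }
  destruct (limit_cover Y full full c (n_closed Y full r - 1) r HY) as [l [Hlen Hl]].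
  { intros; exact I. }
  { intros y _ eta He. destruct (arch eta He) as [m0 Hm0]. exists m0. intros m Hm.
    destruct (Hc m y) as [j [Hj Hd]]. exists j. split; auto.
    pose proof (imono _ _ Hm). lra. }
  specialize (HminY l Hl). simpl in HlenY. lia.
Qed.

Lemma part4 r Rad : 0 < r -> 0 < Rad ->
   forall (X : nat -> MetricSpace) (p : forall k, X k) (Y : MetricSpace) (q : Y),
     (forall k, proper_ms (X k)) -> proper_ms Y -> pGH_conv X p Y q ->
     exists k0, forall k, (k0 <= k)%nat ->
       (n_closed Y (closure Y (oball Y q Rad)) r <=
        n_closed (X k) (closure (X k) (oball (X k) (p k) Rad)) r)%nat.
Proof.
  intros Hr HR X p Y q HX HY Hp.
  apply NNPP; intro Hno.
  set (NY := n_closed Y (closure Y (oball Y q Rad)) r) in *.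
  assert (Hbad : forall k0, exists k, (k0 <= k)%nat /\
     (n_closed (X k) (closure (X k) (oball (X k) (p k) Rad)) r < NY)%nat).
  { intros k0. apply NNPP; intro H1. apply Hno. exists k0. intros k Hk.
    destruct (le_lt_dec NY (n_closed (X k) (closure (X k) (oball (X k) (p k) Rad)) r)); auto.
    exfalso. apply H1. eauto. }
  destruct (n_closed_spec Y (closure Y (oball Y q Rad)) r) as [_ HminY].
  { apply (compact_closed_cover Y _ (cball Y q Rad)); auto. apply closure_ball. }
  destruct (Hbad O) as [kb [_ Hkb]].
  assert (Hper : forall m : nat, exists cm : nat -> Y,
     (forall j, cball Y q (Rad + r + 1) (cm j)) /\
     forall y', mdist q y' < Rad -> 2 * / (INR m + 1) < Rad - mdist q y' ->
       exists j, (j < NY - 1)%nat /\ mdist (cm j) y' <= r + 2 * / (INR m + 1)).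
  { intros m. pose proof (ipos m) as He. pose proof (ile1 m) as He1.
    destruct (Hp (Rad + r + 2) (/ (INR m + 1))) as [k0 Hk0]; [lra|exact He|].
    destruct (Hbad k0) as [k [Hk Hlt]].
    destruct (Hk0 k Hk) as [f [Hfp [Hfd Hfs]]].
    destruct (n_closed_spec (X k) (closure (X k) (oball (X k) (p k) Rad)) r) as [[l [Hl Hlen]] _].
    { apply (compact_closed_cover (X k) _ (cball (X k) (p k) Rad)); [exact Hr|apply HX|apply closure_ball]. }
    pose (h := fun c => if Rle_dec (mdist (p k) c) (Rad + r) then c else p k).
    assert (Hh : forall c, mdist (p k) (h c) <= Rad + r).
    { intros c; unfold h; destruct Rle_dec; auto. rewrite mdist_refl; lra. }
    assert (Hpo : oball (X k) (p k) (Rad + r + 2) (p k)) by (unfold oball; rewrite mdist_refl; lra).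
    exists (fun j => f (h (nth j l (p k)))). split.
    - intros j. unfold cball.
      assert (Hho : oball (X k) (p k) (Rad + r + 2) (h (nth j l (p k))))
        by (unfold oball; specialize (Hh (nth j l (p k))); lra).
      pose proof (Hfd _ _ Hpo Hho) as H1. rewrite Hfp in H1. apply Rabs_def2 in H1.
      specialize (Hh (nth j l (p k))). lra.
    - intros y' Hy'1 Hy'2.
      pose proof (d_nonneg Y q y') as Hnn.
      destruct (Hfs y') as [x [Hxo Hxd]]. { unfold oball; lra. }
      pose proof (Hfd _ _ Hpo Hxo) as H1. rewrite Hfp in H1. apply Rabs_def2 in H1.
      pose proof (mdist_tri Y q y' (f x)) as H. rewrite (mdist_sym Y y' (f x)) in H.
      assert (Hxc : closure (X k) (oball (X k) (p k) Rad) x).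
      { intros e' He'. exists x. unfold oball. rewrite mdist_refl. split; lra. }
      destruct (Hl x Hxc) as [c [Hc Hcd]].
      destruct (In_nth l c (p k) Hc) as [j [Hj Hnth]].
      exists j. split; [lia|]. rewrite Hnth.
      assert (Hhc : h c = c).
      { unfold h. destruct Rle_dec; auto. exfalso.
        pose proof (mdist_tri (X k) (p k) x c). rewrite (mdist_sym (X k) x c) in H0. lra. }
      rewrite Hhc.
      assert (Hco : oball (X k) (p k) (Rad + r + 2) c) by (unfold oball; specialize (Hh c); rewrite Hhc in Hh; lra).
      pose proof (Hfd _ _ Hco Hxo) as H2. apply Rabs_def2 in H2.
      pose proof (mdist_tri Y (f c) (f x) y'). lra. }
  pose (c := fun m => proj1_sig (constructive_indefinite_description _ (Hper m))).
  assert (Hc : forall m, (forall j, cball Y q (Rad + r + 1) (c m j)) /\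
     forall y', mdist q y' < Rad -> 2 * / (INR m + 1) < Rad - mdist q y' ->
       exists j, (j < NY - 1)%nat /\ mdist (c m j) y' <= r + 2 * / (INR m + 1)).
  { intros m. unfold c. destruct (constructive_indefinite_description _ _) as [cm Hcm]. exact Hcm. }
  destruct (limit_cover Y (cball Y q (Rad + r + 1)) (closure Y (oball Y q Rad)) c (NY - 1) r
     (HY q _)) as [l [Hlen Hl]].
  { intros m j. apply (proj1 (Hc m)). }
  { intros y Hy eta He. destruct (Hy (eta/2)) as [y' [Hy'o Hy'd]]; [lra|].
    unfold oball in Hy'o.
    destruct (arch (Rmin (eta/8) ((Rad - mdist q y')/4))) as [m0 Hm0].
    { apply Rmin_pos; lra. }
    pose proof (Rmin_l (eta/8) ((Rad - mdist q y')/4)).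
    pose proof (Rmin_r (eta/8) ((Rad - mdist q y')/4)).
    exists m0. intros m Hm. pose proof (imono _ _ Hm).
    destruct (proj2 (Hc m) y' Hy'o) as [j [Hj Hd]]; [lra|].
    exists j. split; auto.
    pose proof (mdist_tri Y (c m j) y' y). lra. }
  specialize (HminY l Hl). lia.
Qed.

Theorem proposition3p3 :
  (forall r : R, 0 < r ->
   forall (X : nat -> MetricSpace) (Y : MetricSpace),
     (forall k, compact_ms (X k)) -> compact_ms Y -> GH_conv X Y ->
     exists k0, forall k, (k0 <= k)%nat ->
       (n_open (X k) full r <= n_open Y full r)%nat) /\
  (forall r Rad : R, 0 < r -> 0 < Rad ->
   forall (X : nat -> MetricSpace) (p : forall k, X k) (Y : MetricSpace) (q : Y),
     (forall k, proper_ms (X k)) -> proper_ms Y -> pGH_conv X p Y q ->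
     exists k0, forall k, (k0 <= k)%nat ->
       (n_open (X k) (cball (X k) (p k) Rad) r <= n_open Y (cball Y q Rad) r)%nat) /\
  (forall r : R, 0 < r ->
   forall (X : nat -> MetricSpace) (Y : MetricSpace),
     (forall k, compact_ms (X k)) -> compact_ms Y -> GH_conv X Y ->
     exists k0, forall k, (k0 <= k)%nat ->
       (n_closed Y full r <= n_closed (X k) full r)%nat) /\
  (forall r Rad : R, 0 < r -> 0 < Rad ->
   forall (X : nat -> MetricSpace) (p : forall k, X k) (Y : MetricSpace) (q : Y),
     (forall k, proper_ms (X k)) -> proper_ms Y -> pGH_conv X p Y q ->
     exists k0, forall k, (k0 <= k)%nat ->
       (n_closed Y (closure Y (oball Y q Rad)) r <=
        n_closed (X k) (closure (X k) (oball (X k) (p k) Rad)) r)%nat).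
Proof.
  split; [exact part1|]. split; [exact part2|]. split; [exact part3|]. exact part4.
Qed.
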